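(* Consider the centralized caching problem with uncoded prefetching with $N$ files, $K$ users, and local cache size of $M$ files per user, $t=KM/N$, with generalized demands. For every file size $F$, every $\epsilon>0$, and every generalized statistics $\boldsymbol{s}$, $$\min_{\boldsymbol{\mathcal{M}}}R^*_{\epsilon,K}(\boldsymbol{s},\boldsymbol{\mathcal{M}})\ \ge\ \mathrm{Conv}\left(\frac{\binom{K}{t+1}-\binom{K-N_{\mathrm{e}}(\boldsymbol{s})}{t+1}}{\binom{K}{t}}\right)-\left(\frac{1}{F}+N_{\mathrm{e}}^2(\boldsymbol{s})\epsilon\right),$$ where the minimum is over all uncoded prefetchings satisfying the memory constraint and $\mathrm{Conv}(f(t))$ denotes the lower convex envelope of the points $\{(t,f(t)):t\in\{0,1,\dots,K\}\}$, evaluated at $t=KM/N$.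
   Context: Setting: $N$ files of $F$ bits each, all bits i.i.d. Bernoulli$(1/2)$; $K$ users each with $MF$ bits of cache, $M\in[0,N]$. An uncoded prefetching $\boldsymbol{\mathcal{M}}=(\mathcal{M}_1,\dots,\mathcal{M}_K)$: each $\mathcal{M}_k$ is a set of at most $MF$ bit indices and user $k$ stores those bits. A generalized demand is $\boldsymbol{d}=(d_1,\dots,d_K)\in\{0,1,\dots,N\}^K$, where $d_k\neq0$ means user $k$ requests file $W_{d_k}$ and $d_k=0$ means user $k$ makes no request. A rate $R$ is $\epsilon$-achievable for $\boldsymbol{\mathcal{M}},\boldsymbol{d}$ if there are an encoder $X=\psi(W_1,\dots,W_N)\in\{0,1\}^{RF}$ and decoders such that each requesting user $k$ recovers $W_{d_k}$ from $X$ and its cached bits with error probability at most $\epsilon$; $R^*_{\epsilon,K}(\boldsymbol{d},\boldsymbol{\mathcal{M}})$ is the minimum such rate. The statistics of a generalized demand is the length-$N$ array, sorted nonincreasingly, whose $i$-th entry is the number of users requesting the $i$-th most requested file; the generalized type $\mathcal{D}_{\boldsymbol{s}}$ is the set of generalized demands with statistics $\boldsymbol{s}$; $N_{\mathrm{e}}(\boldsymbol{s})$ is the number of distinct requested files. $R^*_{\epsilon,K}(\boldsymbol{s},\boldsymbol{\mathcal{M}})$ is the average of $R^*_{\epsilon,K}(\boldsymbol{d},\boldsymbol{\mathcal{M}})$ over $\boldsymbol{d}\in\mathcal{D}_{\boldsymbol{s}}$. Convention: $\binom{n}{k}=0$ when $k>n$. *)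

(* Defs.v *)
From HB Require Import structures.
From mathcomp Require Import all_boot all_order all_algebra.
From mathcomp Require Import boolp classical_sets reals.
Set Implicit Arguments. Unset Strict Implicit. Unset Printing Implicit Defensive.
Import Order.TTheory GRing.Theory Num.Theory.
Local Open Scope ring_scope.

(* Bit indices: bit j of file n is (n, j), n : 'I_N, j : 'I_F.
   A realization of the library is a finite function w on bit indices;
   the N*F bits are i.i.d. Bernoulli(1/2), i.e. w is uniform. *)
Definition lib (N F : nat) := {ffun 'I_N * 'I_F -> bool}.

Definition file (N F : nat) (w : lib N F) (n : 'I_N) : {ffun 'I_F -> bool} :=
  [ffun j => w (n, j)].

Definition prefetching (N F K : nat) := 'I_K -> {set 'I_N * 'I_F}.

(* A generalized demand: d k = 0 means no request, d k = j (j >= 1) means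
   user k requests file W_j, i.e. the file of index j-1 : 'I_N
   (computed by unlift ord0). *)
Definition gdemand (N K : nat) := {ffun 'I_K -> 'I_N.+1}.

Definition prob {R : realType} (N F : nat) (A : {set lib N F}) : R :=
  #|A|%:R / #|{: lib N F}|%:R.

(* Rate L/F (i.e. L transmitted bits) is eps-achievable for (Mc, d). *)
Definition achievable {R : realType} (N F K : nat) (Mc : prefetching N F K)
    (d : gdemand N K) (eps : R) (L : nat) : Prop :=
  exists psi : lib N F -> {ffun 'I_L -> bool},
    forall (k : 'I_K) (n : 'I_N), unlift ord0 (d k) = Some n ->
    exists phi : {ffun 'I_L -> bool} -> lib N F -> {ffun 'I_F -> bool},
      (* the decoder of user k only uses X and the cached bits *)
      (forall x (w w' : lib N F),
          (forall b, b \in Mc k -> w b = w' b) -> phi x w = phi x w')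
      /\ prob [set w : lib N F | phi (psi w) w != file w n] <= eps.

(* Minimum eps-achievable rate R*_{eps,K}(d, Mc).  Sending all N*F bits is
   always achievable, so the minimum over L in [0, N*F] is the true minimum. *)
Definition Rstar {R : realType} (N F K : nat) (Mc : prefetching N F K)
    (d : gdemand N K) (eps : R) : R :=
  (\big[minn/(N * F)%N]_(L < (N * F).+1 | `[< achievable Mc d eps L >]) L)%:R
  / F%:R.

Definition stats (N K : nat) (d : gdemand N K) : seq nat :=
  sort (fun a b : nat => (b <= a)%N)
    [seq #|[set k | d k == lift ord0 n]| | n <- enum 'I_N].

Definition Ne (s : seq nat) : nat := count (fun x => (0 < x)%N) s.

Definition Rstar_type {R : realType} (N F K : nat) (Mc : prefetching N F K)
    (eps : R) (s : seq nat) : R :=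
  (\sum_(d : gdemand N K | stats d == s) Rstar Mc d eps)
  / #|[set d : gdemand N K | stats d == s]|%:R.

Definition fbound {R : realType} (K ne t : nat) : R :=
  ('C(K, t.+1)%:R - 'C(K - ne, t.+1)%:R) / 'C(K, t)%:R.

Definition Conv {R : realType} (K : nat) (f : nat -> R) (x : R) : R :=
  inf [set y : R | exists lam : 'I_K.+1 -> R,
         (forall i, 0 <= lam i) /\ \sum_i lam i = 1 /\
         \sum_(i : 'I_K.+1) lam i * (i : nat)%:R = x /\
         y = \sum_(i : 'I_K.+1) lam i * f i].

(* Main.v *)
Require Import Defs.
From HB Require Import structures.
From mathcomp Require Import all_boot all_order all_algebra.
From mathcomp Require Import boolp classical_sets reals.
From mathcomp Require Import perm action primitive_action alt.
From mathcomp Require Import zify ring lra.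
Import Order.TTheory GRing.Theory Num.Theory.
Local Open Scope ring_scope.
Set Implicit Arguments. Unset Strict Implicit. Unset Printing Implicit Defensive.
Lemma pow2_bound (R : realType) (b L : nat) (p : R) : 0 <= p ->
  (2 ^ b)%:R * (1 - p) <= (2 ^ L)%:R -> b%:R * (1 - p) - 1 <= L%:R.
Proof.
move=> p0 H.
case: (leqP b L) => bL.
  have : (b%:R : R) <= L%:R by rewrite ler_nat.
  have : (0 : R) <= b%:R by [].
  nra.
pose j := (b - L)%N.
have bE : b = (L + j)%N by rewrite /j; lia.
have jb : (j <= b)%N by lia.
have j2 : (j%:R : R) <= (2 ^ j)%:R by rewrite ler_nat; apply/ltnW/ltn_expl.
rewrite bE expnD natrM in H.
have L2 : (0 : R) < (2 ^ L)%:R by rewrite ltr0n expn_gt0.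
have H2 : (2 ^ j)%:R * (1 - p) <= 1 :> R.
  rewrite -(ler_pM2l L2) mulr1 mulrA; exact H.
have H3 : j%:R * (1 - p) <= 1 :> R.
  case: (lerP 0 (1 - p)) => hp; first by apply: le_trans H2; rewrite ler_wpM2r.
  have : (0:R) <= j%:R by [].
  nra.
have jbR : (j%:R : R) <= b%:R by rewrite ler_nat.
have : (b%:R : R) = L%:R + j%:R by rewrite bE natrD.
nra.
Qed.
Section Decode.
Variables (R : realType) (N F K : nat) (Mc : prefetching N F K) (d : gdemand N K)
  (eps : R) (L ne : nat) (nsel : 'I_ne -> 'I_N) (usel : 'I_ne -> 'I_K).
Hypothesis Hsel : forall i, d (usel i) = lift ord0 (nsel i).

Definition Bset : {set 'I_N * 'I_F} :=
  [set x | [exists i : 'I_ne, (x.1 == nsel i) &&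
      [forall l : 'I_ne, (l <= i)%N ==> (x \notin Mc (usel l))]]].

Lemma decode_bound : achievable Mc d eps L ->
  (2 ^ #|Bset|)%:R * (1 - ne%:R * eps) <= (2 ^ L)%:R :> R.
Proof.
case=> psi Hpsi.
have: forall i : 'I_ne, exists phi : {ffun 'I_L -> bool} -> lib N F -> {ffun 'I_F -> bool},
   (forall x (w w' : lib N F),
          (forall b, b \in Mc (usel i) -> w b = w' b) -> phi x w = phi x w')
      /\ prob [set w : lib N F | phi (psi w) w != file w (nsel i)] <= eps.
  by move=> i; apply: Hpsi; rewrite Hsel liftK.
case/fin_all_exists => phi Hphi.
pose Good := [set w : lib N F | [forall i, phi i (psi w) w == file w (nsel i)]].
pose Bad i := [set w : lib N F | phi i (psi w) w != file w (nsel i)].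
have cardBad : (#|~: Good| <= \sum_i #|Bad i|)%N.
  rewrite -sum1_card.
  apply: (@leq_trans (\sum_(w : lib N F) \sum_i (w \in Bad i : nat))); last first.
    rewrite exchange_big /= leq_eqVlt; apply/orP; left; apply/eqP/eq_bigr => i _.
    by rewrite -sum1_card [RHS]big_mkcond; apply: eq_bigr => w _; case: (w \in Bad i).
  rewrite big_mkcond /=; apply: leq_sum => w _.
  case: ifP => // /[!inE] /forallPn [i Hi].
  rewrite (bigD1 i) //= inE Hi; lia.
have libpos : (0 : R) < #|{: lib N F}|%:R.
  by rewrite ltr0n; apply/card_gt0P; exists [ffun=> false].
have BadR : forall i, (#|Bad i|%:R : R) <= eps * #|{: lib N F}|%:R.
  move=> i; have := (Hphi i).2; rewrite /prob ler_pdivrMr //.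
have GoodR : (#|{: lib N F}|%:R : R) * (1 - ne%:R * eps) <= #|Good|%:R.
  have e1 : (#|{: lib N F}|%:R : R) = #|Good|%:R + #|~: Good|%:R.
    by rewrite -natrD cardsC.
  have e2 : (#|~: Good|%:R : R) <= ne%:R * eps * #|{: lib N F}|%:R.
    apply: (le_trans (y := (\sum_i #|Bad i|)%:R)); first by rewrite ler_nat.
    rewrite natr_sum; apply: (le_trans (y := \sum_(i < ne) eps * #|{: lib N F}|%:R)).
      by apply: ler_sum => i _; apply: BadR.
    by rewrite sumr_const card_ord -mulrA mulr_natl.
  lra.
pose mask (w : lib N F) : lib N F := [ffun x => if x \in Bset then false else w x].
pose f w := (mask w, psi w).
have finj : {in Good &, injective f}.
  move=> w1 w2; rewrite !inE => /forallP G1 /forallP G2 [Em Ep].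
  have out : forall x, x \notin Bset -> w1 x = w2 x.
    move=> x xB; have := congr1 (fun g : lib N F => g x) Em; rewrite !ffunE.
    by rewrite (negbTE xB).
  have key : forall n (i : 'I_ne), nat_of_ord i = n -> forall x, x.1 = nsel i -> w1 x = w2 x.
    elim/ltn_ind => n IH i iE x x1.
    have agree : forall b, b \in Mc (usel i) -> w1 b = w2 b.
      move=> b bM; case: (boolP (b \in Bset)); last exact: out.
      rewrite inE => /existsP [j /andP [/eqP bj /forallP Hj]].
      case: (leqP i j) => ij.
        by have := Hj i; rewrite ij bM.
      by apply: (IH j) => //; rewrite -iE.
    have e1 := G1 i; have e2 := G2 i.
    have : file w1 (nsel i) = file w2 (nsel i).
      rewrite -(eqP e1) -(eqP e2) Ep; apply: (Hphi i).1; exact: agree.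
    move=> /(congr1 (fun g : {ffun 'I_F -> bool} => g x.2)); rewrite !ffunE -x1.
    by case: x {x1}.
  apply/ffunP => x; case: (boolP (x \in Bset)); last exact: out.
  rewrite inE => /existsP [i /andP [/eqP x1 _]]; exact: (key _ i erefl).
have cardGood : (#|Good| <= 2 ^ #|~: Bset| * 2 ^ L)%N.
  rewrite -(card_in_imset finj).
  have sub : f @: Good \subset finset.setX [set g in pffun_on false (~: Bset) predT] [set: {ffun 'I_L -> bool}].
    apply/fintype.subsetP => y /imsetP [w _ ->]; rewrite !inE andbT.
    apply/pffun_onP; split=> //.
    apply/fintype.subsetP => x; rewrite finset.in_setC unfold_in /mask ffunE; by case: (x \in Bset).
  apply: (leq_trans (subset_leq_card sub)); rewrite cardsX cardsE card_pffun_on cardsT.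
  by rewrite card_ffun card_bool card_ord.
have libE : #|{: lib N F}| = (2 ^ #|Bset| * 2 ^ #|~: Bset|)%N.
  by rewrite cardT -cardE card_ffun card_bool -expnD cardsC.
have c2 : (0 : R) < (2 ^ #|~: Bset|)%:R by rewrite ltr0n expn_gt0.
rewrite -(ler_pM2r c2) mulrAC -natrM -libE.
apply: (le_trans GoodR); rewrite -natrM mulnC ler_nat; exact: cardGood.
Qed.
End Decode.

Lemma Bset_card_le (N F K : nat) (Mc : prefetching N F K) ne (nsel : 'I_ne -> 'I_N)
   (usel : 'I_ne -> 'I_K) : (#|Bset Mc nsel usel| <= ne * F)%N.
Proof.
have sub : Bset Mc nsel usel \subset finset.setX (nsel @: [set: 'I_ne]) [set: 'I_F].
  apply/fintype.subsetP => x; rewrite !inE andbT => /existsP [i /andP [/eqP -> _]].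
  by apply: imset_f; rewrite inE.
apply: (leq_trans (subset_leq_card sub)); rewrite cardsX cardsT card_ord leq_mul2r.
by apply/orP; right; apply: (leq_trans (leq_imset_card _ _)); rewrite cardsT card_ord.
Qed.

Lemma Rstar_lb (R : realType) (N F K : nat) (Mc : prefetching N F K) (d : gdemand N K)
  (eps : R) ne (nsel : 'I_ne -> 'I_N) (usel : 'I_ne -> 'I_K) :
  (forall i, d (usel i) = lift ord0 (nsel i)) -> (0 < F)%N -> 0 <= eps ->
  #|Bset Mc nsel usel|%:R / F%:R - (F%:R^-1 + ne%:R ^+ 2 * eps) <= Rstar Mc d eps.
Proof.
move=> Hsel F0 e0.
set b := #|Bset Mc nsel usel|.
have bF : (b%:R : R) <= ne%:R * F%:R by rewrite -natrM ler_nat Bset_card_le.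
have bNF : (b <= N * F)%N.
  by rewrite /b (leq_trans (max_card _)) // card_prod !card_ord.
have ne0 : (0 : R) <= ne%:R * eps by apply: mulr_ge0.
have Hm : b%:R * (1 - ne%:R * eps) - 1 <=
   (\big[minn/(N * F)%N]_(L < (N * F).+1 | `[< achievable Mc d eps L >]) L)%:R.
  apply: (big_ind (fun m : nat => b%:R * (1 - ne%:R * eps) - 1 <= m%:R :> R)).
  - have : (b%:R : R) <= (N * F)%:R by rewrite ler_nat.
    have : (0 : R) <= b%:R by [].
    nra.
  - move=> x y hx hy; case: (leqP x y) => h.
      by [].
    by [].
  - move=> L /asboolP ach.
    apply: pow2_bound => //; exact: decode_bound Hsel ach.
rewrite /Rstar.
have Fp : (0 : R) < F%:R by rewrite ltr0n.
apply: (le_trans (y := (b%:R * (1 - ne%:R * eps) - 1) / F%:R)); last first.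
  by rewrite ler_pM2r ?invr_gt0.
rewrite mulrBl mulrBr mulr1.
have : b%:R * (ne%:R * eps) / F%:R <= ne%:R ^+ 2 * eps :> R.
  rewrite ler_pdivrMr // expr2.
  have : (0:R) <= ne%:R * eps by [].
  nra.
lra.
Qed.
Lemma card_allperm (T : finType) : #|{: {perm T}}| = (#|T|)`!.
Proof. by rewrite -card_Sym -cardsT. Qed.

Lemma sum_perm_fix (T : finType) (a b : T) :
  ((\sum_(p : {perm T}) (p a == b : nat)) * #|T| = (#|T|)`!)%N.
Proof.
have inv : forall b', (\sum_(p : {perm T}) (p a == b : nat) = \sum_(p : {perm T}) (p a == b' : nat))%N.
  move=> b'; rewrite (reindex_inj (mulIg (tperm b b'))); apply: eq_bigr => p _.
  by rewrite permM (canF_eq (tpermK b b')) tpermL.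
transitivity (\sum_(b' : T) \sum_(p : {perm T}) (p a == b' : nat))%N.
  by rewrite mulnC -sum_nat_const; apply: eq_bigr => b' _; exact: inv.
rewrite exchange_big /= -card_allperm -sum1_card; apply: eq_bigr => p _.
rewrite (bigD1 (p a)) //= eqxx big1 // => b' /negbTE.
by rewrite eq_sym => ->.
Qed.

Lemma sum_perm_tuple (T : finType) m (u : m.-tuple T) (g : m.-tuple T -> nat) : uniq u ->
  ((#|T| ^_ m) * \sum_(s : {perm T}) g [tuple of map s u] =
   (#|T|)`! * \sum_(v : m.-tuple T | uniq v) g v)%N.
Proof.
move=> uu.
have mle : (m <= #|T|)%N.
  by rewrite -(size_tuple u) -(card_uniqP uu) max_card.
have tr := ntransitive_weak mle (Sym_trans T).
have dt : forall v : m.-tuple T, uniq v -> v \in m.-dtuple([set: T]).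
  by move=> v uv; rewrite inE uv /=; apply/fintype.subsetP => x _; rewrite finset.in_setT.
have inv : forall v : m.-tuple T, uniq v ->
   (\sum_(s : {perm T}) g [tuple of map s u] = \sum_(s : {perm T}) g [tuple of map s v])%N.
  move=> v uv; have [t _ vE] := atransP2 tr (dt u uu) (dt v uv).
  rewrite (reindex_inj (mulgI t)); apply: eq_bigr => s _; congr g.
  apply: val_inj; rewrite /= vE /= -map_comp; apply: eq_map => x /=.
  by rewrite permM.
have cardU : #|[set v : m.-tuple T | uniq v]| = (#|T| ^_ m)%N.
  rewrite -(@card_uniq_tuples T m predT); apply: eq_card => v; rewrite !inE all_predT //.
transitivity (\sum_(v : m.-tuple T | uniq v) \sum_(s : {perm T}) g [tuple of map s v])%N.
  rewrite -cardU -sum_nat_const; apply: eq_big => [v|v]; first by rewrite inE.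
  by rewrite inE => uv; apply: inv.
rewrite exchange_big /= -card_allperm -sum_nat_const; apply: eq_bigr => s _.
rewrite [RHS](reindex_inj (h := fun v : m.-tuple T => [tuple of map s v])) /=.
  apply: eq_bigl => v; by rewrite map_inj_uniq //; apply: perm_inj.
move=> v1 v2 /(congr1 val) /= /(inj_map (@perm_inj _ s)) e; exact: val_inj.
Qed.
Definition liftp N (p : {perm 'I_N}) (a : 'I_N.+1) : 'I_N.+1 :=
  if unlift ord0 a is Some n then lift ord0 (p n) else ord0.

Definition trd N K (p : {perm 'I_N}) (s : {perm 'I_K}) (d : gdemand N K) : gdemand N K :=
  [ffun k => liftp p (d ((s^-1)%g k))].

Definition cnt N K (d : gdemand N K) (n : 'I_N) := #|[set k | d k == lift ord0 n]|.

Lemma liftp_lift N (p : {perm 'I_N}) n : liftp p (lift ord0 n) = lift ord0 (p n).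
Proof. by rewrite /liftp liftK. Qed.

Lemma liftpK N (p : {perm 'I_N}) a : liftp (p^-1)%g (liftp p a) = a.
Proof.
case: (unliftP ord0 a) => [n|] ->; first by rewrite !liftp_lift permK.
by rewrite /liftp !unlift_none.
Qed.

Lemma liftp_eq N (p : {perm 'I_N}) a n :
  (liftp p a == lift ord0 n) = (a == lift ord0 ((p^-1)%g n)).
Proof.
case: (unliftP ord0 a) => [m|] ->.
  rewrite liftp_lift !(inj_eq (@lift_inj _ ord0)).
  by apply/eqP/eqP => [<-|->]; rewrite ?permK ?permKV.
by rewrite /liftp unlift_none !(negbTE (neq_lift _ _)).
Qed.

Lemma trd_inj N K (p : {perm 'I_N}) (s : {perm 'I_K}) : injective (trd p s).
Proof.
have can : cancel (trd p s) (trd (p^-1)%g (s^-1)%g).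
  move=> d; apply/ffunP => k; rewrite !ffunE invgK permK liftpK //.
exact: can_inj can.
Qed.

Lemma cnt_trd N K (p : {perm 'I_N}) (s : {perm 'I_K}) d n :
  cnt (trd p s d) n = cnt d ((p^-1)%g n).
Proof.
rewrite /cnt -[RHS](card_preimset _ (@perm_inj _ (s^-1)%g)); apply: eq_card => k.
by rewrite !inE ffunE liftp_eq.
Qed.

Lemma stats_cnt N K (d : gdemand N K) : stats d = sort (fun a b : nat => (b <= a)%N) [seq cnt d n | n <- enum 'I_N].
Proof. by []. Qed.

Lemma stats_trd N K (p : {perm 'I_N}) (s : {perm 'I_K}) d : stats (trd p s d) = stats d.
Proof.
rewrite !stats_cnt; apply/perm_sortP.
- by move=> a b; apply: leq_total.
- by move=> a b c h1 h2; apply: leq_trans h2 h1.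
- by move=> a b /andP [h1 h2]; apply/eqP; rewrite eqn_leq h1 h2.
rewrite (eq_map (cnt_trd p s d)) map_comp; apply: perm_map.
apply: uniq_perm; first by rewrite map_inj_uniq ?enum_uniq //; apply: perm_inj.
  exact: enum_uniq.
move=> n; rewrite mem_enum; apply/mapP; exists (p n); first by rewrite mem_enum.
by rewrite permK.
Qed.

Lemma Ne_stats N K (d : gdemand N K) : Ne (stats d) = #|[set n : 'I_N | (0 < cnt d n)%N]|.
Proof.
rewrite /Ne stats_cnt count_sort count_map cardE /enum_mem size_filter.
rewrite count_filter; apply: eq_count => n; by rewrite !inE /= andbT.
Qed.

Lemma sel_exists N K (d : gdemand N K) :
  exists nsel : 'I_(Ne (stats d)) -> 'I_N, exists usel : 'I_(Ne (stats d)) -> 'I_K,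
    injective nsel /\ forall i, d (usel i) = lift ord0 (nsel i).
Proof.
set Req := [set n : 'I_N | (0 < cnt d n)%N].
have E := Ne_stats d.
pose nsel (i : 'I_(Ne (stats d))) := enum_val (cast_ord E i) : 'I_N.
have : forall i, exists k : 'I_K, d k = lift ord0 (nsel i).
  move=> i; have := enum_valP (cast_ord E i); rewrite inE => /card_gt0P [k].
  by rewrite inE => /eqP e; exists k.
case/fin_all_exists => usel Hu; exists nsel, usel; split => //.
by move=> i j /enum_val_inj /cast_ord_inj.
Qed.

Lemma Ne_le_K N K (d : gdemand N K) : (Ne (stats d) <= K)%N.
Proof.
have [nsel [usel [ni Hu]]] := sel_exists d.
have ui : injective usel.
  by move=> i j e; apply: ni; apply: (@lift_inj _ ord0); rewrite -!Hu e.
by have := leq_card _ ui; rewrite !card_ord.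
Qed.
Lemma ffact_bin (K t m : nat) : (m <= K)%N ->
  ((K - t) ^_ m * 'C(K, t) = K ^_ m * 'C(K - m, t))%N.
Proof.
move=> mK.
case: (leqP t K) => tK; last first.
  by rewrite !bin_small ?muln0 //; lia.
case: (leqP (t + m) K) => h; last first.
  rewrite ffact_small; last by lia.
  by rewrite (bin_small (n := K - m)); [rewrite muln0 | lia].
have e1 : ((K - t) ^_ m * (K - t - m)`! = (K - t)`!)%N by apply: ffact_fact; lia.
have e2 : ('C(K, t) * (t`! * (K - t)`!) = K`!)%N by apply: bin_fact.
have e3 : (K ^_ m * (K - m)`! = K`!)%N by apply: ffact_fact.
have e4 : ('C(K - m, t) * (t`! * (K - m - t)`!) = (K - m)`!)%N by apply: bin_fact; lia.
have e5 : (K - m - t = K - t - m)%N by lia.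
rewrite e5 in e4.
have pos : (0 < t`! * (K - t - m)`!)%N by rewrite muln_gt0 !fact_gt0.
apply/eqP; rewrite -(eqn_pmul2r pos); apply/eqP.
transitivity (K`!).
  rewrite -e2 -e1; ring.
rewrite -e3 -e4; ring.
Qed.

Lemma hockey (K t ne : nat) : (ne <= K)%N ->
  (\sum_(i < ne) 'C(K - i.+1, t) + 'C(K - ne, t.+1) = 'C(K, t.+1))%N.
Proof.
elim: ne => [|ne IH] h; first by rewrite big_ord0 subn0.
rewrite big_ord_recr /= -addnA.
rewrite [X in (_ + X)%N]addnC -binS.
have -> : ((K - ne.+1).+1 = K - ne)%N by lia.
by apply: IH; lia.
Qed.

Lemma fbound_sum (R : realType) K ne t : (ne <= K)%N -> (t <= K)%N ->
  fbound K ne t = \sum_(i < ne) ((K - t) ^_ i.+1)%:R / (K ^_ i.+1)%:R :> R.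
Proof.
move=> neK tK.
rewrite /fbound -(hockey t neK) natrD addrK natr_sum mulr_suml.
apply: eq_bigr => i _.
have mK : (i.+1 <= K)%N by apply: leq_trans neK; exact: ltn_ord.
have e := ffact_bin t mK.
have c0 : ('C(K, t)%:R : R) != 0 by rewrite pnatr_eq0 -lt0n bin_gt0.
have f0 : ((K ^_ i.+1)%:R : R) != 0 by rewrite pnatr_eq0 -lt0n ffact_gt0.
apply/eqP; rewrite eqr_div // -!natrM; apply/eqP; congr (_%:R).
by rewrite mulnC -e.
Qed.

Lemma sum_ind (R : realType) K (g : 'I_K.+1 -> R) :
  \sum_i (i == ord_max)%:R * g i = g ord_max.
Proof.
rewrite (bigD1 ord_max) //= eqxx mul1r big1 ?addr0 // => i /negbTE ->.
by rewrite mul0r.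
Qed.

Lemma Conv_le (R : realType) K (f : nat -> R) (X : R) (lam : 'I_K.+1 -> R) :
  (forall i : 'I_K.+1, 0 <= f i) -> f K = 0 -> (forall i, 0 <= lam i) -> \sum_i lam i = 1 ->
  \sum_i lam i * (i : nat)%:R <= X -> X <= K%:R ->
  Conv K f X <= \sum_i lam i * f i.
Proof.
move=> f0 fK l0 l1 mX XK.
set mu := \sum_i lam i * (i : nat)%:R in mX.
set V := \sum_i lam i * f i.
have V0 : 0 <= V by apply: sumr_ge0 => i _; apply: mulr_ge0.
pose th := if mu < K%:R then (X - mu) / (K%:R - mu) else 0.
have th0 : 0 <= th /\ th <= 1 /\ (1 - th) * mu + th * K%:R = X.
  rewrite /th; case: ifP => h.
    have hp : 0 < K%:R - mu by rewrite subr_gt0.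
    split; first by apply: divr_ge0; lra.
    split; first by rewrite ler_pdivrMr // mul1r; lra.
    rewrite mulrBl mul1r; field; lra.
  split => //; split; first lra.
  move/negbT: h; rewrite -leNgt => h; lra.
case: th0 => th0 [th1 thX].
pose lam' (i : 'I_K.+1) := (1 - th) * lam i + th * (i == ord_max)%:R.
have sum' : forall g : 'I_K.+1 -> R, \sum_i lam' i * g i = (1 - th) * \sum_i lam i * g i + th * g ord_max.
  move=> g; rewrite -(sum_ind g) mulr_sumr mulr_sumr -big_split /=.
  by apply: eq_bigr => i _; rewrite /lam'; ring.
rewrite /Conv; set S := (X in inf X).
have mem : S ((1 - th) * V + th * f K).
  exists lam'; split.
    move=> i; rewrite /lam'; apply: addr_ge0; apply: mulr_ge0 => //; lra.
  split.
    have := sum' (fun _ => 1); rewrite (eq_bigr (fun i => lam' i)); last by move=> i _; rewrite mulr1.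
    move=> ->; rewrite (eq_bigr (fun i => lam i)); last by move=> i _; rewrite mulr1.
    by rewrite l1; ring.
  split; first by rewrite sum' /=; rewrite -thX.
  by rewrite sum'.
have hl : has_lbound S.
  exists 0 => y [l [lp [_ [_ ->]]]]; apply: sumr_ge0 => i _; exact: mulr_ge0.
apply: (le_trans (ge_inf hl mem)).
rewrite fK mulr0 addr0; have : 0 <= th * V by apply: mulr_ge0.
lra.
Qed.
Lemma card_sum (T : finType) (A : {set T}) : #|A| = (\sum_x (x \in A : nat))%N.
Proof. by rewrite -sum1_card big_mkcond; apply: eq_bigr => x _; case: (x \in A). Qed.

Lemma card_Bset_eq (N F K : nat) (Mc : prefetching N F K) ne (nsel : 'I_ne -> 'I_N)
   (usel : 'I_ne -> 'I_K) : injective nsel ->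
  #|Bset Mc nsel usel| = (\sum_x \sum_(i : 'I_ne) ((x.1 == nsel i) &&
      [forall l : 'I_ne, (l <= i)%N ==> (x \notin Mc (usel l))] : nat))%N.
Proof.
move=> ni; rewrite card_sum; apply: eq_bigr => x _.
case: (boolP (x \in Bset Mc nsel usel)) => xB.
  move: (xB); rewrite inE => /existsP [i Hi].
  rewrite (bigD1 i) //= Hi big1 // => j ji.
  case/andP: Hi => /eqP x1 _; rewrite x1.
  case: (boolP (nsel i == nsel j)) => //= /eqP /ni ij.
  by rewrite ij eqxx in ji.
rewrite big1 // => i _; apply/eqP; rewrite eqb0; apply/negP => Hi.
by move: xB; rewrite inE => /existsPn /(_ i); rewrite Hi.
Qed.

Lemma part_sum (R : realType) N F K (Mc : prefetching N F K) (g : nat -> R) :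
  \sum_(x : 'I_N * 'I_F) g #|[set k | x \in Mc k]| =
  \sum_(t : 'I_K.+1) #|[set x | #|[set k | x \in Mc k]| == t]|%:R * g t.
Proof.
have tle : forall x, (#|[set k | x \in Mc k]| < K.+1)%N.
  by move=> x; rewrite ltnS (leq_trans (max_card _)) // card_ord.
transitivity (\sum_(x : 'I_N * 'I_F) \sum_(t : 'I_K.+1)
    ((#|[set k | x \in Mc k]| == t)%:R * g t)).
  apply: eq_bigr => x _; rewrite (bigD1 (Ordinal (tle x))) //= eqxx mul1r big1 ?addr0 //.
  move=> t tn; rewrite (_ : (_ == _) = false) ?mul0r //; apply/negbTE.
  by apply: contra tn => /eqP e; apply/eqP/val_inj; rewrite /= e.
rewrite exchange_big; apply: eq_bigr => t _ /=; rewrite -mulr_suml; congr (_ * _).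
rewrite card_sum natr_sum; apply: eq_bigr => x _; rewrite inE; by case: (_ == _).
Qed.

Lemma fbound_ge0 (R : realType) K ne t : 0 <= fbound K ne t :> R.
Proof.
rewrite /fbound; apply: divr_ge0 => //; rewrite subr_ge0 ler_nat; apply: leq_bin2l.
exact: leq_subr.
Qed.

Lemma fbound_K (R : realType) K ne : fbound K ne K = 0 :> R.
Proof. rewrite /fbound (@bin_small K K.+1) // (@bin_small (K - ne) K.+1) ?subrr ?mul0r //; lia. Qed.

Lemma sum_tx N F K (Mc : prefetching N F K) :
  (\sum_(x : 'I_N * 'I_F) #|[set k | x \in Mc k]| = \sum_k #|Mc k|)%N.
Proof.
transitivity (\sum_(x : 'I_N * 'I_F) \sum_k (x \in Mc k : nat))%N.
  by apply: eq_bigr => x _; rewrite card_sum; apply: eq_bigr => k _; rewrite inE.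
by rewrite exchange_big; apply: eq_bigr => k _; rewrite card_sum.
Qed.

Lemma Vbound (R : realType) N F K (Mc : prefetching N F K) ne (M : R) :
  (0 < N)%N -> (0 < F)%N -> 0 <= M -> M <= N%:R ->
  (forall k, #|Mc k|%:R <= M * F%:R) ->
  Conv K (fbound K ne) (K%:R * M / N%:R) <=
  \sum_x fbound K ne #|[set k | x \in Mc k]| / (N%:R * F%:R).
Proof.
move=> N0 F0 M0 MN Mk.
have Np : (0 : R) < N%:R by rewrite ltr0n.
have Fp : (0 : R) < F%:R by rewrite ltr0n.
have NFp : (0 : R) < N%:R * F%:R by apply: mulr_gt0.
pose c (t : 'I_K.+1) := #|[set x | #|[set k | x \in Mc k]| == t]|%:R : R.
have conv := @Conv_le R K (fbound K ne) (K%:R * M / N%:R) (fun t => c t / (N%:R * F%:R)).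
have -> : \sum_x fbound K ne #|[set k | x \in Mc k]| / (N%:R * F%:R) =
   \sum_t c t / (N%:R * F%:R) * fbound K ne t.
  rewrite -mulr_suml part_sum mulr_suml; apply: eq_bigr => t _; rewrite /c; ring.
apply: conv.
- by move=> i; apply: fbound_ge0.
- exact: fbound_K.
- by move=> i; apply: divr_ge0 => //; apply: ltW.
- rewrite -mulr_suml.
  have := part_sum Mc (fun _ => 1 : R); rewrite sumr_const card_prod !card_ord.
  under [in X in _ = X -> _]eq_bigr do rewrite mulr1.
  by move=> <-; rewrite natrM mulfV // gt_eqF.
- rewrite (eq_bigr (fun t : 'I_K.+1 => c t * (t : nat)%:R / (N%:R * F%:R))); last first.
    by move=> t _; rewrite mulrAC.
  rewrite -mulr_suml -(part_sum Mc (fun t => t%:R)) -natr_sum sum_tx natr_sum.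
  rewrite ler_pdivrMr //.
  have -> : K%:R * M / N%:R * (N%:R * F%:R) = \sum_(k < K) M * F%:R.
    by rewrite sumr_const card_ord -mulr_natl; field; rewrite gt_eqF.
  by apply: ler_sum => k _; apply: Mk.
- rewrite ler_pdivrMr // ler_wpM2l //.
Qed.

Lemma sigma_count (K : nat) ne (usel : 'I_ne -> 'I_K) (i : 'I_ne) (A : pred 'I_K) :
  injective usel ->
  (K ^_ i.+1 * \sum_(s : {perm 'I_K})
      ([forall l : 'I_ne, (l <= i)%N ==> (s (usel l) \in A)] : nat) =
   K`! * #|A| ^_ i.+1)%N.
Proof.
move=> ui.
pose f (l : 'I_i.+1) := usel (widen_ord (ltn_ord i) l).
pose u : i.+1.-tuple 'I_K := [tuple f l | l < i.+1].
have uu : uniq u.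
  rewrite /u /= map_inj_uniq ?enum_uniq // => a b /ui /(congr1 val) /= e.
  exact: val_inj.
have eq : forall s : {perm 'I_K}, [forall l : 'I_ne, (l <= i)%N ==> (s (usel l) \in A)] =
    all A [tuple of map s u].
  move=> s; apply/forallP/allP.
    move=> H k /mapP [k' /mapP [l' _ ->] ->]; have := H (widen_ord (ltn_ord i) l').
    by rewrite /= -ltnS ltn_ord.
  move=> H l; apply/implyP => li; apply: H; apply/mapP; exists (usel l) => //.
  apply/mapP; exists (Ordinal (li : (l < i.+1)%N)); first by rewrite mem_enum.
  by rewrite /f; congr usel; apply: val_inj.
rewrite (eq_bigr (fun s : {perm 'I_K} => (all A [tuple of map s u] : nat))); last first.
  by move=> s _; rewrite eq.
have := sum_perm_tuple (fun v => (all A v : nat)) uu; rewrite card_ord => ->.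
congr (_ * _)%N; rewrite -(@card_uniq_tuples _ i.+1 A) card_sum big_mkcond /=.
by apply: eq_bigr => v _; rewrite inE; case: (uniq v); case: (all A v).
Qed.

Lemma pi_count (R : realType) N (a b : 'I_N) : (0 < N)%N ->
  (\sum_(p : {perm 'I_N}) (p a == b : nat))%:R = N`!%:R / N%:R :> R.
Proof.
move=> N0; have := sum_perm_fix a b; rewrite card_ord => <-.
by rewrite natrM mulfK // pnatr_eq0 -lt0n.
Qed.

Lemma perd (R : realType) N F K (Mc : prefetching N F K) (eps : R) (d : gdemand N K) :
  (0 < N)%N -> (0 < F)%N -> 0 <= eps ->
  (K`! * N`!)%:R * (\sum_x fbound K (Ne (stats d)) #|[set k | x \in Mc k]| / (N%:R * F%:R)
     - (F%:R^-1 + (Ne (stats d))%:R ^+ 2 * eps)) <=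
  \sum_(s : {perm 'I_K}) \sum_(p : {perm 'I_N}) Rstar Mc (trd p s d) eps.
Proof.
move=> N0 F0 e0.
have [nsel [usel [ni Hu]]] := sel_exists d.
have ui : injective usel.
  by move=> i j e; apply: ni; apply: (@lift_inj _ ord0); rewrite -!Hu e.
have hne := Ne_le_K d.
set ne := Ne (stats d) in nsel usel ni Hu ui hne *.
set c := F%:R^-1 + ne%:R ^+ 2 * eps.
have Fp : (0 : R) < F%:R by rewrite ltr0n.
have Np : (0 : R) < N%:R by rewrite ltr0n.
pose b (s : {perm 'I_K}) (p : {perm 'I_N}) :=
  #|Bset Mc (fun i => p (nsel i)) (fun i => s (usel i))|.
have step1 : \sum_(s : {perm 'I_K}) \sum_(p : {perm 'I_N}) ((b s p)%:R / F%:R - c) <=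
    \sum_(s : {perm 'I_K}) \sum_(p : {perm 'I_N}) Rstar Mc (trd p s d) eps.
  apply: ler_sum => s _; apply: ler_sum => p _; apply: Rstar_lb => //.
  by move=> i; rewrite ffunE permK Hu liftp_lift.
apply: le_trans step1.
have key : forall s p, ((b s p)%:R : R) = \sum_x \sum_(i : 'I_ne)
    (p (nsel i) == x.1)%:R *
    ([forall l : 'I_ne, (l <= i)%N ==> (s (usel l) \in [predC [set k | x \in Mc k]])] : nat)%:R.
  move=> s p; rewrite /b card_Bset_eq; last by move=> i j /perm_inj /ni.
  rewrite natr_sum; apply: eq_bigr => x _; rewrite natr_sum; apply: eq_bigr => i _.
  rewrite -natrM mulnb eq_sym; congr ((_ && _ : nat)%:R).
  by apply: eq_forallb => l; rewrite !inE.
have cardA : forall x, #|[predC [set k | x \in Mc k]]| = (K - #|[set k | x \in Mc k]|)%N.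
  move=> x; have h := cardC [set k | x \in Mc k]; rewrite card_ord in h; lia.
have txK : forall x, (#|[set k | x \in Mc k]| <= K)%N.
  by move=> x; rewrite (leq_trans (max_card _)) // card_ord.
have sumB : \sum_(s : {perm 'I_K}) \sum_(p : {perm 'I_N}) ((b s p)%:R : R) =
    (K`! * N`!)%:R / N%:R * \sum_x fbound K ne #|[set k | x \in Mc k]|.
  under eq_bigr do under eq_bigr do rewrite key.
  transitivity (\sum_(s : {perm 'I_K}) \sum_x \sum_(i : 'I_ne) \sum_(p : {perm 'I_N})
    (p (nsel i) == x.1)%:R *
    ([forall l : 'I_ne, (l <= i)%N ==> (s (usel l) \in [predC [set k | x \in Mc k]])] : nat)%:R : R).
    apply: eq_bigr => s _; rewrite exchange_big; apply: eq_bigr => x _; exact: exchange_big.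
  rewrite exchange_big mulr_sumr; apply: eq_bigr => x _.
  rewrite exchange_big /= (fbound_sum _ hne (txK x)) mulr_sumr; apply: eq_bigr => i _.
  transitivity ((\sum_(p : {perm 'I_N}) (p (nsel i) == x.1 : nat))%:R *
     (\sum_(s : {perm 'I_K}) ([forall l : 'I_ne, (l <= i)%N ==>
        (s (usel l) \in [predC [set k | x \in Mc k]])] : nat))%:R : R).
    by rewrite !natr_sum mulr_sumr; apply: eq_bigr => s _; rewrite mulr_suml.
  rewrite pi_count //.
  have sc := sigma_count i [predC [set k | x \in Mc k]] ui.
  have f0 : ((K ^_ i.+1)%:R : R) != 0.
    by rewrite pnatr_eq0 -lt0n ffact_gt0; apply: leq_trans hne; exact: ltn_ord.
  have -> : ((\sum_(s : {perm 'I_K}) ([forall l : 'I_ne, (l <= i)%N ==>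
        (s (usel l) \in [predC [set k | x \in Mc k]])] : nat))%:R : R) =
        (K`!)%:R * ((K - #|[set k | x \in Mc k]|) ^_ i.+1)%:R / (K ^_ i.+1)%:R.
    apply: (mulfI f0); rewrite -[LHS]natrM sc cardA natrM [RHS]mulrC divfK //.
  by rewrite natrM; field; rewrite f0 gt_eqF.
have e1 : \sum_(s : {perm 'I_K}) \sum_(p : {perm 'I_N}) ((b s p)%:R / F%:R - c) =
   (\sum_(s : {perm 'I_K}) \sum_(p : {perm 'I_N}) ((b s p)%:R : R)) / F%:R - (K`! * N`!)%:R * c.
  transitivity (\sum_(s : {perm 'I_K}) (\sum_(p : {perm 'I_N}) ((b s p)%:R : R) / F%:R - (N`!)%:R * c)).
    apply: eq_bigr => s _.
    by rewrite sumrB -mulr_suml sumr_const card_allperm card_ord mulr_natl.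
  rewrite sumrB -mulr_suml sumr_const card_allperm card_ord -[N`!%:R *+ K`!]mulr_natl natrM. congr (_ - _). rewrite mulr_suml; apply: eq_bigr => s _. by rewrite mulr_suml.
rewrite e1 sumB le_eqVlt; apply/orP; left; apply/eqP.
rewrite -mulr_suml /c; field; rewrite !gt_eqF //.
Qed.

Unset Implicit Arguments.

Theorem lemma4 (R : realType) (N K F : nat) (M eps : R) (s : seq nat) :
  (0 < N)%N -> (0 < F)%N -> 0 <= M -> M <= N%:R -> 0 < eps ->
  (exists d : gdemand N K, stats d = s) ->
  forall Mc : prefetching N F K,
    (forall k, #|Mc k|%:R <= M * F%:R) ->
    Conv K (fbound K (Ne s)) (K%:R * M / N%:R)
      - (F%:R^-1 + (Ne s)%:R ^+ 2 * eps)
    <= Rstar_type Mc eps s.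
Proof.
move=> N0 F0 M0 MN e0 [d0 hd0] Mc HM.
have hV := @Vbound R N F K Mc (Ne s) M N0 F0 M0 MN HM.
set V := \sum_x fbound K (Ne s) #|[set k | x \in Mc k]| / (N%:R * F%:R) in hV.
set c := F%:R^-1 + (Ne s)%:R ^+ 2 * eps.
suff H : V - c <= Rstar_type Mc eps s by lra.
rewrite /Rstar_type.
have Dp : (0 < #|[set d : gdemand N K | stats d == s]|)%N.
  by apply/card_gt0P; exists d0; rewrite inE hd0.
have DpR : (0 : R) < #|[set d : gdemand N K | stats d == s]|%:R by rewrite ltr0n.
have KNp : (0 : R) < (K`! * N`!)%:R by rewrite ltr0n muln_gt0 !fact_gt0.
rewrite ler_pdivlMr //.
have e1 : (K`! * N`!)%:R * \sum_(d : gdemand N K | stats d == s) Rstar Mc d eps =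
   \sum_(d : gdemand N K | stats d == s) \sum_(sg : {perm 'I_K}) \sum_(p : {perm 'I_N})
       Rstar Mc (trd p sg d) eps.
  rewrite exchange_big /=.
  transitivity (\sum_(sg : {perm 'I_K}) \sum_(p : {perm 'I_N})
       \sum_(d : gdemand N K | stats d == s) Rstar Mc d eps).
    by rewrite !sumr_const !card_allperm !card_ord -mulrnA -[RHS]mulr_natr mulrC mulnC.
  apply: eq_bigr => sg _; rewrite [RHS]exchange_big /=; apply: eq_bigr => p _.
  rewrite (reindex_inj (@trd_inj N K p sg)) /=; apply: eq_bigl => d.
  by rewrite stats_trd.
have e2 : \sum_(d : gdemand N K | stats d == s) (K`! * N`!)%:R * (V - c) <=
   \sum_(d : gdemand N K | stats d == s) \sum_(sg : {perm 'I_K}) \sum_(p : {perm 'I_N})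
       Rstar Mc (trd p sg d) eps.
  apply: ler_sum => d /eqP hd.
  have := @perd R N F K Mc eps d N0 F0 (ltW e0); rewrite hd.
  by rewrite /V /c.
rewrite -e1 sumr_const in e2.
have e3 : #|[set d : gdemand N K | stats d == s]| = #|[pred d : gdemand N K | stats d == s]|.
  by apply: eq_card => d; rewrite inE.
rewrite -(ler_pM2l KNp).
have e4 : (K`! * N`!)%:R * ((V - c) * #|[set d : gdemand N K | stats d == s]|%:R) =
   (K`! * N`!)%:R * (V - c) *+ #|[pred d : gdemand N K | stats d == s]|.
  by rewrite e3 mulr_natr mulrnAr.
rewrite e4; apply: le_trans e2; rewrite le_eqVlt; apply/orP; left; apply/eqP.
congr (_ *+ _); by apply: eq_card => d.
Qed.
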